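(* Let $G$ be a digraph and $f$ a discrete Morse function on $G$. If $v_0v_1\cdots v_nv_0$ ($n\ge1$) is a directed loop in $G$, then $f(v_i)>0$ for every $0\le i\le n$.
   Context: A digraph $G=(V,E)$ consists of a set $V$ and $E\subseteq(V\times V)\setminus\{(v,v)\}$; $(u,v)\in E$ is written $u\to v$. An allowed elementary $n$-path is a sequence $v_0\cdots v_n$ of vertices with $v_{i-1}\to v_i\in E$ for $1\le i\le n$. A directed loop is an allowed elementary path of the form $v_0v_1\cdots v_nv_0$ with $n\ge1$. A map $f:V\to[0,+\infty)$ is a discrete Morse function on $G$ if for every allowed elementary path $v_0\cdots v_n$: (i) there is at most one index $0\le i\le n$ with $f(v_i)=0$ such that $v_0\cdots v_{i-1}v_{i+1}\cdots v_n$ is an allowed elementary $(n-1)$-path; (ii) there is at most one vertex $u$ with $f(u)=0$ such that for some $-1\le j\le n$ the sequence $v_0\cdots v_juv_{j+1}\cdots v_n$ (meaning $uv_0\cdots v_n$ if $j=-1$, $v_0\cdots v_nu$ if $j=n$) is an allowed elementary $(n+1)$-path. *)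

(* Defs.v *)
From Stdlib Require Import Reals List Arith.
Import ListNotations.
Open Scope R_scope.

Definition digraph {V : Type} (E : V -> V -> Prop) : Prop :=
  forall v, ~ E v v.

Fixpoint edge_chain {V : Type} (E : V -> V -> Prop) (p : list V) : Prop :=
  match p with
  | [] => True
  | x :: q =>
      match q with
      | [] => True
      | y :: _ => E x y /\ edge_chain E q
      end
  end.

(* An allowed elementary n-path v_0 ... v_n is a list of length n+1 >= 1
   with v_{i-1} -> v_i for 1 <= i <= n. *)
Definition allowed_path {V : Type} (E : V -> V -> Prop) (p : list V) : Prop :=
  p <> [] /\ edge_chain E p.

Definition remove_at {V : Type} (i : nat) (p : list V) : list V :=
  firstn i p ++ skipn (S i) p.

(* insert u after the first j vertices: v_0 ... v_{j-1} u v_j ... v_n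
   (j = 0 gives u v_0 ... v_n, j = n+1 gives v_0 ... v_n u) *)
Definition insert_at {V : Type} (j : nat) (u : V) (p : list V) : list V :=
  firstn j p ++ u :: skipn j p.

Definition discrete_morse {V : Type} (E : V -> V -> Prop) (f : V -> R) : Prop :=
  (forall v, 0 <= f v) /\
  (forall (p : list V) (d : V) (i j : nat),
      allowed_path E p ->
      (i < length p)%nat -> (j < length p)%nat ->
      f (nth i p d) = 0 -> f (nth j p d) = 0 ->
      allowed_path E (remove_at i p) -> allowed_path E (remove_at j p) ->
      i = j) /\
  (forall (p : list V) (u w : V),
      allowed_path E p ->
      f u = 0 -> f w = 0 ->
      (exists j, (j <= length p)%nat /\ allowed_path E (insert_at j u p)) ->
      (exists k, (k <= length p)%nat /\ allowed_path E (insert_at k w p)) ->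
      u = w).

(* Main.v *)
Require Import Defs.
From Stdlib Require Import Reals List Arith Lia Lra.
Import ListNotations.
Open Scope R_scope.

Lemma chain_app {V : Type} (E : V -> V -> Prop) (l1 l2 : list V) (y : V) :
  edge_chain E (l1 ++ y :: l2) <-> edge_chain E (l1 ++ [y]) /\ edge_chain E (y :: l2).
Proof.
  induction l1 as [|a l1 IH].
  - simpl. tauto.
  - destruct l1 as [|b l1'].
    + simpl. tauto.
    + change ((a :: b :: l1') ++ y :: l2) with (a :: ((b :: l1') ++ y :: l2)).
      change ((a :: b :: l1') ++ [y]) with (a :: ((b :: l1') ++ [y])).
      simpl in IH |- *. tauto.
Qed.

Lemma chain_tail {V : Type} (E : V -> V -> Prop) a l :
  edge_chain E (a :: l) -> edge_chain E l.
Proof. destruct l; simpl; tauto. Qed.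

Lemma chain_prefix {V : Type} (E : V -> V -> Prop) (l1 l2 : list V) :
  edge_chain E (l1 ++ l2) -> edge_chain E l1.
Proof.
  induction l1 as [|a l1 IH]; [simpl; auto|].
  destruct l1 as [|b l1']; [simpl; auto|].
  simpl in *. tauto.
Qed.

Lemma loop_zero {V : Type} (E : V -> V -> Prop) (f : V -> R)
  (Hf : discrete_morse E f) (y : V) (l : list V) :
  edge_chain E (y :: l ++ [y]) -> f y = 0 -> False.
Proof.
  intros Hc Hy. destruct Hf as [_ [Hi _]].
  assert (H := Hi (y :: l ++ [y]) y 0%nat (S (length l))).
  assert (Hfirst : firstn (S (length l)) (y :: l ++ [y]) = y :: l).
  { simpl. rewrite firstn_app, firstn_all, Nat.sub_diag. simpl. now rewrite app_nil_r. }
  assert (Hskip : skipn (S (S (length l))) (y :: l ++ [y]) = []).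
  { change (skipn (S (length l)) (l ++ [y]) = []). rewrite skipn_all2; [reflexivity|]. rewrite length_app; simpl; lia. }
  assert (Hnth : nth (S (length l)) (y :: l ++ [y]) y = y).
  { simpl. rewrite app_nth2, Nat.sub_diag by lia. reflexivity. }
  assert (Hlen : length (y :: l ++ [y]) = S (S (length l))).
  { simpl. rewrite length_app. simpl. lia. }
  enough (0%nat = S (length l)) by lia.
  apply H.
  - split; [discriminate | exact Hc].
  - rewrite Hlen; lia.
  - rewrite Hlen; lia.
  - exact Hy.
  - rewrite Hnth. exact Hy.
  - unfold remove_at. simpl. split.
    + destruct l; discriminate.
    + exact (chain_tail E y _ Hc).
  - unfold remove_at. rewrite Hfirst, Hskip, app_nil_r. split; [discriminate|].
    exact (chain_prefix E (y :: l) [y] Hc).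
Qed.

(* The loop v_0 v_1 ... v_n v_0 is  v0 :: vs ++ [v0]  with vs = v_1 ... v_n, n >= 1. *)
Theorem lemma4p1 (V : Type) (E : V -> V -> Prop) (f : V -> R)
  (HG : digraph E) (Hf : discrete_morse E f)
  (v0 : V) (vs : list V) (Hn : (1 <= length vs)%nat)
  (Hloop : allowed_path E (v0 :: vs ++ [v0])) :
  forall x, In x (v0 :: vs) -> 0 < f x.
Proof.
  intros x Hx.
  assert (H0 : 0 <= f x) by (destruct Hf as [H _]; apply H).
  destruct (Req_dec (f x) 0) as [Hz|Hz]; [exfalso|lra].
  destruct Hloop as [_ Hc].
  destruct Hx as [<-|Hx].
  - exact (loop_zero E f Hf v0 vs Hc Hz).
  - apply in_split in Hx. destruct Hx as [A [B ->]].
    rewrite <- app_assoc in Hc.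
    change (v0 :: A ++ (x :: B) ++ [v0]) with ((v0 :: A) ++ x :: (B ++ [v0])) in Hc.
    apply chain_app in Hc. destruct Hc as [H1 H2].
    apply (loop_zero E f Hf x (B ++ v0 :: A)); [|exact Hz].
    rewrite <- app_assoc.
    change (x :: B ++ (v0 :: A) ++ [x]) with ((x :: B) ++ v0 :: (A ++ [x])).
    apply chain_app. split.
    + simpl. exact H2.
    + exact H1.
Qed.
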